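(* Let $G$ be a finitely generated group with finite symmetric generating set $S$, and $H\subset G$ a finite index subgroup. For any subset $A\subseteq G/H$, $$\operatorname{sw}(A)\le 6+2\sum_{k=1}^{\infty}\Phi_G\!\left(\tfrac14\left(\tfrac34\right)^k|A|\right)\left(\tfrac34\right)^k|A|.$$
   Context: $G$ carries its Cayley graph structure (an edge between $g$ and $sg$, $s\in S$, $sg\ne g$) and $G/H$ its Schreier graph structure (vertices the cosets $gH$; an edge between distinct cosets $x,y$ iff $y=sx$ for some $s\in S$). For a vertex set $F$ of a graph, $\partial F$ is the set of edges from $F$ to its complement. The Folner profile of $G$ is $\Phi_G(V)=\min\{|\partial F|/|F|: F\subseteq G \text{ finite nonempty}, |F|\le\max(V,1)\}$ for $V>0$ (so $\Phi_G$ is non-increasing and $\Phi_G(V)=\Phi_G(1)$ for $V<1$). For disjoint vertex sets $B_1,B_2$, $E(B_1,B_2)$ is the set of edges between them. A sweepout of a finite vertex set $A$ is a nested sequence $\emptyset=F_0\subseteq\dots\subseteq F_{|A|}=A$ with $|F_j|=j$, of width $\max_j|E(F_j,A\setminus F_j)|$; $\operatorname{sw}(A)$ is the minimum width over all sweepouts of $A$. *)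

(* Defs.v *)
From HB Require Import structures.
From mathcomp Require Import all_boot all_order all_algebra.
From mathcomp Require Import all_classical all_reals all_analysis.
Set Implicit Arguments. Unset Strict Implicit. Unset Printing Implicit Defensive.
Import Order.TTheory GRing.Theory Num.Theory.
Local Open Scope ring_scope.

(* Edge boundary of a finite set F (given as a duplicate-free list) in the
   Cayley graph of (G,S): edges {g, s g} (s in S, s g <> g) with exactly one
   endpoint in F.  Each such edge is listed once, oriented as (x, s x) with
   x in F and s x not in F (then automatically s x <> x).                   *)
Definition cayley_boundary (G : groupType) (S : seq G) (F : seq G) : nat :=
  size (undup [seq (x, (s * x)%g) | x <- F,
                   s <- [seq t <- S | (t * x)%g \notin F]]).

(* Folner profile  Phi_G(V) = min { |dF|/|F| : F finite nonempty, |F| <= max(V,1) }.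
   (The minimum exists since only finitely many values occur; we take the
   infimum of the set of values, which is this minimum.)                     *)
Definition folner_profile (R : realType) (G : groupType) (S : seq G) (V : R) : R :=
  inf [set r : R | exists F : seq G,
        [/\ uniq F, F != [::], (size F)%:R <= Num.max V 1
          & r = (cayley_boundary S F)%:R / (size F)%:R]].

(* G/H is presented by a type Q together with the
   canonical projection pi : G -> Q (surjective, pi g = pi g' iff g^-1 g' in H),
   so that the coset g H is pi g.                          *)
Definition schreier_adj (G : groupType) (S : seq G) (Q : Type) (pi : G -> Q)
  (x y : Q) : Prop :=
  x <> y /\ exists g s, [/\ s \in S, pi g = x & pi (s * g)%g = y].

(* |E(B1,B2)| for disjoint B1, B2: edges with one end in B1, the other in B2,
   each counted once via its orientation from B1 to B2.                      *)
Definition edges_between (G : groupType) (S : seq G) (Q : finType) (pi : G -> Q)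
  (B1 B2 : {set Q}) : nat :=
  #|[set p : Q * Q | [&& p.1 \in B1, p.2 \in B2 & `[< schreier_adj S pi p.1 p.2 >]]]|.

Definition is_sweepout (Q : finType) (A : {set Q}) (F : nat -> {set Q}) : Prop :=
  [/\ forall j, (j <= #|A|)%N -> #|F j| = j,
      forall j, (j < #|A|)%N -> F j \subset F j.+1
    & F #|A| = A].

Definition sweep_width (G : groupType) (S : seq G) (Q : finType) (pi : G -> Q)
  (A : {set Q}) (F : nat -> {set Q}) : nat :=
  \max_(j < #|A|.+1) edges_between S pi (F j) (A :\: F j).

(* sw(A) = minimal width of a sweepout of A (the minimum exists: widths are
   natural numbers and sweepouts exist; we take the infimum, which is it).   *)
Definition sweepwidth (R : realType) (G : groupType) (S : seq G) (Q : finType)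
  (pi : G -> Q) (A : {set Q}) : R :=
  inf [set r : R | exists F : nat -> {set Q},
        is_sweepout A F /\ r = (sweep_width S pi A F)%:R].

(* Main.v *)
Require Import Defs.
From HB Require Import structures.
From mathcomp Require Import all_boot all_order all_algebra.
From mathcomp Require Import all_classical all_reals all_analysis.
From mathcomp Require Import zify ring lra.
Import Order.TTheory GRing.Theory Num.Theory.
Set Implicit Arguments. Unset Strict Implicit.

Section Main.
Variables (G : groupType) (S : seq G) (H : {pred G}) (Q : finType) (pi : G -> Q).
Implicit Types (A B C D : {set Q}).
Local Notation E := (edges_between S pi).

Lemma E_mono (B1 B1' B2 B2' : {set Q}) : B1 \subset B1' -> B2 \subset B2' -> E B1 B2 <= E B1' B2'.
Proof.
move=> s1 s2; rewrite /edges_between; apply: subset_leq_card; apply/fintype.subsetP=> p; rewrite !inE.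
by case/and3P=> h1 h2 ->; rewrite (fintype.subsetP s1 _ h1) (fintype.subsetP s2 _ h2).
Qed.

Lemma E_U1 (B1 B1' B2 : {set Q}) : E (B1 :|: B1') B2 <= E B1 B2 + E B1' B2.
Proof.
rewrite /edges_between; apply: leq_trans (leq_card_setU _ _).
apply: subset_leq_card; apply/fintype.subsetP=> p.
by rewrite !inE; case/and3P=> /orP[]-> -> ->; rewrite ?orbT.
Qed.

Lemma E_U2 (B1 B2 B2' : {set Q}) : E B1 (B2 :|: B2') <= E B1 B2 + E B1 B2'.
Proof.
rewrite /edges_between; apply: leq_trans (leq_card_setU _ _).
apply: subset_leq_card; apply/fintype.subsetP=> p.
by rewrite !inE; case/and3P=> -> /orP[]-> ->; rewrite ?orbT.
Qed.

Lemma E_le (B1 B2 : {set Q}) : E B1 B2 <= #|B1| * #|B2|.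
Proof.
rewrite -cardsX; apply: subset_leq_card; apply/fintype.subsetP=> [[x y]].
by rewrite !inE /=; case/and3P=> -> ->.
Qed.

Definition good (A : {set Q}) (w : nat) :=
  exists F, is_sweepout A F /\ sweep_width S pi A F <= w.

Lemma good_mono A w w' : w <= w' -> good A w -> good A w'.
Proof. by move=> ww [F [h1 h2]]; exists F; split=> //; apply: leq_trans ww. Qed.

Lemma sweep_nest A F : is_sweepout A F -> forall i j, i <= j -> j <= #|A| -> F i \subset F j.
Proof.
case=> _ hs _ i j; elim: j => [|j IH] ij jA.
  by move: ij; rewrite leqn0 => /eqP ->.
move: ij; rewrite leq_eqVlt => /orP[/eqP -> //|]; rewrite ltnS => ij.
exact: fintype.subset_trans (IH ij (ltnW jA)) (hs _ jA).
Qed.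

Lemma sweep_sub A F : is_sweepout A F -> forall j, j <= #|A| -> F j \subset A.
Proof. by move=> hF j jA; have := sweep_nest hF jA (leqnn _); case: (hF) => _ _ ->. Qed.

Lemma width_le A F w : (forall j, j <= #|A| -> E (F j) (A :\: F j) <= w) ->
  sweep_width S pi A F <= w.
Proof. by move=> h; apply/bigmax_leqP => j _; apply: h; rewrite -ltnS. Qed.

Lemma width_ge A F j : j <= #|A| -> E (F j) (A :\: F j) <= sweep_width S pi A F.
Proof.
move=> jA; rewrite /sweep_width.
exact: (@leq_bigmax _ (fun i : 'I_#|A|.+1 => E (F i) (A :\: F i)) (Ordinal (jA : j < #|A|.+1))).
Qed.

Lemma sweep_exists A : exists F, is_sweepout A F /\
   forall j, j <= #|A| -> #|F j| = j.
Proof.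
exists (fun j => [set x in take j (enum A)]).
have hc : forall j, j <= #|A| -> #|[set x in take j (enum A)]| = j.
  move=> j jA; rewrite cardsE (card_uniqP _) ?size_take ?size_enum_set; last first.
    by apply: take_uniq; exact: enum_uniq.
  by rewrite -cardE; case: ltngtP jA => // ->.
split=> //; split=> //.
  move=> j jA; apply/fintype.subsetP=> x; rewrite !inE => xt.
  by rewrite (take_nth x) -?cats1 ?mem_cat ?xt // -cardE.
apply/setP=> x; rewrite inE cardE take_size mem_enum //.
Qed.

Lemma good_base A : #|A| <= 5 -> good A 6.
Proof.
move=> A5; have [F [hF _]] := sweep_exists A; exists F; split=> //.
apply: width_le => j jA; apply: leq_trans (E_le _ _) _.
case: (hF) => hc _ _; rewrite (hc _ jA) cardsD (finset.setIidPr (sweep_sub hF jA)) hc //.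
move: A5 jA; set n := #|A|; case: n => [|[|[|[|[|[|]]]]]] //; case: j => [|[|[|[|[|[|]]]]]] //.
Qed.
Lemma card_disjU B C : [disjoint B & C] -> #|B :|: C| = #|B| + #|C|.
Proof. by move=> d; rewrite -cardsUI (disjoint_setI0 d) cards0 addn0. Qed.

Lemma good_U B C wB wC : [disjoint B & C] -> good B wB -> good C wC ->
  good (B :|: C) (E B C + maxn wB wC).
Proof.
move=> dBC [FB [hB wBh]] [FC [hC wCh]].
have cA := card_disjU dBC.
set F := fun j => if j <= #|B| then FB j else B :|: FC (j - #|B|).
have subC : forall k, k <= #|C| -> FC k \subset C by exact: sweep_sub hC.
have subB : forall k, k <= #|B| -> FB k \subset B by exact: sweep_sub hB.
case: (hB) => cB nB eB; case: (hC) => cC nC eC.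
have cU : forall k, k <= #|C| -> #|B :|: FC k| = #|B| + k.
  move=> k kC; rewrite card_disjU ?cC //.
  exact: disjointWr (subC _ kC) dBC.
exists F; split.
  split.
  - move=> j jA; rewrite cA in jA; rewrite /F; case: leqP => jB; first exact: cB.
    rewrite cU; first by rewrite subnKC // ltnW.
    by rewrite leq_subLR.
  - move=> j jA; rewrite cA in jA; rewrite /F.
    case: (ltngtP j #|B|) => hj.
    + exact: nB.
    + rewrite subSn; last exact: ltnW.
      apply: finset.setUS; apply: nC; rewrite ltn_subLR //; exact: ltnW.
    + rewrite hj eB; exact: finset.subsetUl.
  - rewrite /F cA; case: leqP => h.
    + have C0 : #|C| = 0 by move: h; rewrite -{2}[#|B|]addn0 leq_add2l leqn0 => /eqP.
      by move/eqP: C0; rewrite cards_eq0 => /eqP ->; rewrite cards0 addn0 eB finset.setU0.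
    + by rewrite addKn eC.
apply: width_le => j jA; rewrite cA in jA; rewrite /F; case: (leqP j #|B|) => jB.
  have s1 : (B :|: C) :\: FB j \subset (B :\: FB j) :|: C.
    by apply/fintype.subsetP => x; rewrite !inE; case/andP=> -> /orP[] ->; rewrite ?orbT.
  apply: leq_trans (E_mono (fintype.subxx _) s1) _.
  apply: leq_trans (E_U2 _ _ _) _; rewrite addnC leq_add //.
    by apply: E_mono (subB _ jB) (fintype.subxx _).
  by apply: leq_trans _ (leq_maxl _ wC); apply: leq_trans wBh; exact: width_ge.
have kC : j - #|B| <= #|C| by rewrite leq_subLR.
have s2 : (B :|: C) :\: (B :|: FC (j - #|B|)) \subset C :\: FC (j - #|B|).
  apply/fintype.subsetP => x; rewrite !inE negb_or; case/andP=> /andP[xB ->] /orP[] //.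
  by move=> xB'; move: xB; rewrite xB'.
apply: leq_trans (E_mono (fintype.subxx _) s2) _.
apply: leq_trans (E_U1 _ _ _) _; rewrite leq_add //.
  by apply: E_mono (fintype.subxx _) (finset.subsetDl _ _).
by apply: leq_trans _ (leq_maxr wB _); apply: leq_trans wCh; exact: width_ge.
Qed.
Hypothesis hS_symm : forall s, s \in S -> (s^-1)%g \in S.
Hypothesis hpi_surj : forall x : Q, exists g, pi g = x.
Hypothesis hpi_coset : forall g g' : G, pi g = pi g' <-> (g^-1 * g')%g \in H.

Definition rep (x : Q) : G := proj1_sig (cid (hpi_surj x)).
Lemma repK x : pi (rep x) = x.
Proof. by rewrite /rep; case: cid. Qed.

Definition act (g : G) (x : Q) : Q := pi (g * rep x)%g.

Lemma act_pi g h : act g (pi h) = pi (g * h)%g.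
Proof.
rewrite /act; apply/hpi_coset.
have := repK (pi h) => /hpi_coset.
by rewrite invgM -mulgA (mulgA g^-1%g) mulVg mul1g.
Qed.

Lemma actM g1 g2 x : act (g1 * g2)%g x = act g1 (act g2 x).
Proof. by rewrite [act g2 x]/act act_pi mulgA. Qed.

Lemma act1 x : act 1%g x = x.
Proof. by rewrite /act mul1g repK. Qed.

Lemma actK g : cancel (act g) (act g^-1%g).
Proof. by move=> x; rewrite -actM mulVg act1. Qed.

Lemma act_inj g : injective (act g).
Proof. exact: can_inj (actK g). Qed.

Lemma adjP x y : schreier_adj S pi x y <-> x <> y /\ exists2 s, s \in S & act s x = y.
Proof.
split.
  move=> [xy [g [s [sS eg es]]]]; split => //; exists s => //.
  by rewrite -eg act_pi.
move=> [xy [s sS e]]; subst y; rewrite /schreier_adj; split; first exact: xy.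
by exists (rep x), s; rewrite repK.
Qed.

Lemma adj_sym x y : schreier_adj S pi x y -> schreier_adj S pi y x.
Proof.
move=> /adjP [xy [s sS e]]; subst y; apply/adjP; split.
  by move=> e; apply: xy; rewrite e.
by exists s^-1%g; [exact: hS_symm | rewrite actK].
Qed.

Lemma count_sum (T : Type) (a : pred T) (r : seq T) : count a r = \sum_(j <- r) a j.
Proof. by elim: r => [|x r IH]; rewrite ?big_nil ?big_cons //= IH. Qed.

Lemma sum_const_seq (T : Type) (r : seq T) (c : nat) : \sum_(j <- r) c = (size r * c)%N.
Proof. by elim: r => [|x r IH]; rewrite ?big_nil ?big_cons //= IH mulSn. Qed.

Lemma card_sum (T : finType) (P : pred T) : #|[set x | P x]| = \sum_x P x.
Proof.
rewrite cardsE -sum1_card big_mkcond /=; apply: eq_bigr => x _.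
by rewrite unfold_in; case: (P x).
Qed.

Lemma sum_lt (f h : nat) : \sum_(t < f) (t < h) = minn f h.
Proof.
elim: f => [|f IH]; first by rewrite big_ord0 min0n.
rewrite big_ord_recr /= IH; case: (ltnP f h) => fh.
  by rewrite addn1 !minnE; lia.
by rewrite addn0 !minnE; lia.
Qed.

Lemma sum_int (f a b : nat) : \sum_(t < f) ((a <= t) && (t < b)) = minn f b - a.
Proof.
elim: f => [|f IH]; first by rewrite big_ord0 min0n.
rewrite big_ord_recr /= IH; case: (leqP a f) => af; case: (ltnP f b) => fb /=;
  rewrite ?addn0 ?addn1 !minnE; lia.
Qed.

Lemma sum_eq_mem (T : finType) (R : {set T}) (a : T) : \sum_(x in R) (a == x) = (a \in R).
Proof.
rewrite big_mkcond /= (bigD1 a) //= eqxx big1 ?addn0; first by case: (a \in R).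
by move=> x /negPf; rewrite eq_sym => ->; case: (x \in R).
Qed.

Lemma sum_count_pre (T : Type) (s : seq T) (P : Q -> T -> bool) :
  \sum_(y : Q) count (P y) s = \sum_(z <- s) #|[set y | P y z]|.
Proof.
under eq_bigr do rewrite count_sum.
rewrite exchange_big /=; apply: eq_bigr => z _; by rewrite card_sum.
Qed.

Lemma sum_count_preI (I : finType) (T : Type) (s : seq T) (P : I -> T -> bool) :
  \sum_(y : I) count (P y) s = \sum_(z <- s) #|[set y | P y z]|.
Proof.
under eq_bigr do rewrite count_sum.
rewrite exchange_big /=; apply: eq_bigr => z _; by rewrite card_sum.
Qed.

Definition bpairs (F : seq G) : seq (G * G) :=
  undup [seq (x, (s * x)%g) | x <- F, s <- [seq t <- S | (t * x)%g \notin F]].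

Lemma bpairsP F q : q \in bpairs F -> q.1 \in F.
Proof.
by rewrite mem_undup => /allpairsPdep [x [s [xF _ ->]]].
Qed.

Lemma bpairs_mem F x s : x \in F -> s \in S -> (s * x)%g \notin F ->
  (x, (s * x)%g) \in bpairs F.
Proof.
move=> xF sS sx; rewrite mem_undup; apply/allpairsPdep; exists x, s; split => //.
by rewrite mem_filter sx sS.
Qed.

Lemma card_act_pre g (R : {set Q}) : #|[set y | act g y \in R]| = #|R|.
Proof.
have -> : [set y | act g y \in R] = act g^-1%g @: R.
  apply/finset.setP => y; rewrite inE; apply/idP/imsetP => [h|[x xR ->]].
    by exists (act g y) => //; rewrite actK.
  by rewrite -actM mulgV act1.
exact: card_imset (@act_inj _).
Qed.

Lemma sum_pre_const (T : Type) (s : seq T) (z : T -> G) (R : {set Q}) :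
  \sum_(y : Q) count (fun w => act (z w) y \in R) s = (size s * #|R|)%N.
Proof.
rewrite (@sum_count_pre _ s (fun y w => act (z w) y \in R)) /=.
under eq_bigr do rewrite card_act_pre.
by rewrite sum_const_seq.
Qed.

Definition sel (x z : Q) : G := nth 1%g S (find (fun s => act s x == z) S).

Lemma selP x z : schreier_adj S pi x z -> sel x z \in S /\ act (sel x z) x = z.
Proof.
case/adjP => _ [s sS e].
have hs : has (fun s => act s x == z) S by apply/hasP; exists s => //; rewrite e.
split; first by rewrite /sel mem_nth // -has_find.
by apply/eqP; exact: (nth_find 1%g hs).
Qed.

Definition hh (F : seq G) (y x : Q) := count (fun g => act g y == x) F.
Definition LL (F : seq G) (R : {set Q}) (y : Q) (t : nat) := [set x in R | t < hh F y x].

Lemma sum_LL F R y : \sum_(t < size F) #|LL F R y t| = count (fun g => act g y \in R) F.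
Proof.
have -> : \sum_(t < size F) #|LL F R y t| = \sum_(t < size F) \sum_(x in R) (t < hh F y x).
  apply: eq_bigr => t _; rewrite /LL card_sum [RHS]big_mkcond /=; apply: eq_bigr => x _.
  by case: (x \in R).
rewrite exchange_big /=.
have -> : \sum_(x in R) \sum_(t < size F) (t < hh F y x) = \sum_(x in R) hh F y x.
  apply: eq_bigr => x _; rewrite sum_lt; apply/minn_idPr; exact: count_size.
rewrite /hh; under eq_bigr do rewrite count_sum.
rewrite exchange_big count_sum /=; apply: eq_bigr => g _; exact: sum_eq_mem.
Qed.

Lemma LL_le F R y t : #|LL F R y t| <= size F.
Proof.
have h1 : #|LL F R y t| <= #|[seq act g y | g <- F]|.
  apply: subset_leq_card; apply/fintype.subsetP => x; rewrite inE => /andP[_ hx].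
  have : 0 < hh F y x by apply: leq_ltn_trans hx.
  rewrite /hh -has_count => /hasP [g gF /eqP <-]; exact: map_f.
apply: leq_trans h1 _; rewrite -(size_map (fun g => act g y) F); exact: card_size.
Qed.

Lemma stepA F y x z (s : G) : uniq F -> act s x = z ->
  hh F y x - hh F y z <= count (fun g => (act g y == x) && ((s * g)%g \notin F)) F.
Proof.
move=> uF sxz.
have hsplit : hh F y x = count (fun g => (act g y == x) && ((s * g)%g \in F)) F
                      + count (fun g => (act g y == x) && ((s * g)%g \notin F)) F.
  rewrite /hh -size_filter -(count_predC (fun g => (s*g)%g \in F)) !count_filter.
  by congr (_ + _); apply: eq_count => g /=; rewrite andbC.
have le : count (fun g => (act g y == x) && ((s * g)%g \in F)) F <= hh F y z.
  rewrite -size_filter /hh -size_filter.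
  rewrite -(size_map (fun g => (s * g)%g)); apply: uniq_leq_size.
    rewrite map_inj_uniq ?filter_uniq //; exact: mulgI.
  move=> w /mapP [g]; rewrite mem_filter => /andP[/andP[/eqP gy sgF] gF] ->.
  by rewrite mem_filter sgF actM gy sxz eqxx.
rewrite hsplit; lia.
Qed.

Lemma stepE F R y : uniq F ->
  \sum_(t < size F) edges_between S pi (LL F R y t) (R :\: LL F R y t)
   <= count (fun q => act q.1 y \in R) (bpairs F).
Proof.
move=> uF.
set adjb := fun p : Q * Q => `[< schreier_adj S pi p.1 p.2 >].
set c := fun p : Q * Q => [&& p.1 \in R, p.2 \in R & adjb p].
set P := fun (p : Q * Q) g => (act g y == p.1) && ((sel p.1 p.2 * g)%g \notin F).
have e1 : \sum_(t < size F) edges_between S pi (LL F R y t) (R :\: LL F R y t)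
   = \sum_p \sum_(t < size F) [&& p.1 \in LL F R y t, p.2 \in R :\: LL F R y t & adjb p].
  rewrite exchange_big /=; apply: eq_bigr => t _; by rewrite /edges_between card_sum.
rewrite e1; clear e1.
have e2 : \sum_p \sum_(t < size F) [&& p.1 \in LL F R y t, p.2 \in R :\: LL F R y t & adjb p]
   <= \sum_p count (fun g => c p && P p g) F.
  apply: leq_sum => p _; case cp : (c p).
    move: cp; rewrite /c => /and3P [p1R p2R ap].
    have [sS sx] := selP (asboolW ap).
    have -> : \sum_(t < size F) [&& p.1 \in LL F R y t, p.2 \in R :\: LL F R y t & adjb p]
       = \sum_(t < size F) ((hh F y p.2 <= t) && (t < hh F y p.1)).
      apply: eq_bigr => t _; rewrite /LL !inE p1R p2R ap /= !andbT.
      by rewrite andbC -leqNgt.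
    rewrite sum_int (minn_idPr _); last exact: count_size.
    exact: stepA uF sx.
  rewrite big1 // => t _; move: cp; rewrite /c /LL !inE.
  by case: (p.1 \in R); case: (p.2 \in R); case: (adjb p); rewrite /= ?andbF ?andbT //; case: (_ < _).
apply: leq_trans e2 _.
rewrite (@sum_count_preI _ _ F (fun p g => c p && P p g)).
have e3 : forall g, g \in F -> #|[set p | c p && P p g]|
     <= count (fun q => (q.1 == g) && (act q.1 y \in R)) (bpairs F).
  move=> g gF.
  set phi := fun p : Q * Q => (g, (sel p.1 p.2 * g)%g).
  rewrite cardE -(size_map phi) -size_filter; apply: uniq_leq_size.
    rewrite map_inj_in_uniq ?enum_uniq // => [[x1 z1]] [x2 z2].
    rewrite !mem_enum !inE /c /P /phi /= => /andP[/and3P[_ _ a1] /andP[/eqP e1 _]].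
    move=> /andP[/and3P[_ _ a2] /andP[/eqP e2 _]] [es].
    have [_ s1] := selP (asboolW a1); have [_ s2] := selP (asboolW a2).
    move: s1 s2 => /= s1 s2; subst x1 x2.
    rewrite -actM es in s1; rewrite -actM in s2.
    by rewrite s1 in s2; rewrite s2.
  move=> q /mapP [[x z]]; rewrite mem_enum inE /c /P /= => /andP[/and3P[xR zR a] /andP[/eqP e nF]] ->.
  have [sS _] := selP (asboolW a).
  by rewrite mem_filter /phi /= eqxx e xR bpairs_mem.
apply: leq_trans (_ : _ <= \sum_(g <- F) count (fun q => (q.1 == g) && (act q.1 y \in R)) (bpairs F)) _.
  by rewrite big_seq [X in _ <= X]big_seq; apply: leq_sum => g gF; exact: e3.
rewrite (count_sum _ (bpairs F)).
under eq_bigr do rewrite count_sum.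
rewrite exchange_big /= !big_seq; apply: leq_sum => q qB.
case: (act q.1 y \in R); last by rewrite big1 // => g _; rewrite andbF.
under eq_bigr do rewrite andbT.
rewrite -count_sum (eq_count (a2 := pred1 q.1)); last by move=> g; rewrite /= eq_sym.
by rewrite count_uniq_mem // bpairsP.
Qed.

Lemma extract (F : seq G) (R : {set Q}) : uniq F -> 0 < size F -> 0 < #|R| ->
  exists B, [/\ B \subset R, 0 < #|B|, #|B| <= size F &
     size F * edges_between S pi B (R :\: B) <= size (bpairs F) * #|B|].
Proof.
move=> uF f0 R0.
set f := size F; set b := size (bpairs F).
pose EE (y : Q) (t : nat) := edges_between S pi (LL F R y t) (R :\: LL F R y t).
case: (boolP [exists y : Q, [exists t : 'I_f,
   (0 < #|LL F R y t|) && (f * EE y t <= b * #|LL F R y t|)]]).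
  case/existsP => y /existsP [t /andP [h1 h2]].
  exists (LL F R y t); split => //; last exact: LL_le.
  by apply/fintype.subsetP => x; rewrite inE => /andP[].
rewrite negb_exists => /forallP hall.
have hyt : forall y (t : 'I_f), b * #|LL F R y t| + (0 < #|LL F R y t|) <= f * EE y t.
  move=> y t; have := hall y; rewrite negb_exists => /forallP /(_ t).
  case: (posnP #|LL F R y t|) => [->|pos] /=; first by rewrite muln0.
  by rewrite -ltnNge addn1.
set K := \sum_(y : Q) \sum_(t < f) (0 < #|LL F R y t|).
have sL : \sum_(y : Q) \sum_(t < f) #|LL F R y t| = f * #|R|.
  under eq_bigr do rewrite (sum_LL F R).
  exact: (sum_pre_const F (fun g => g)).
have sE : \sum_(y : Q) \sum_(t < f) EE y t <= b * #|R|.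
  apply: leq_trans (_ : _ <= \sum_(y : Q) count (fun q => act q.1 y \in R) (bpairs F)) _.
    apply: leq_sum => y _; exact: stepE.
  by rewrite (sum_pre_const (bpairs F) (fun q => q.1)).
have h1 : b * (f * #|R|) + K <= f * (b * #|R|).
  rewrite -sL /K big_distrr -big_split /=.
  apply: (@leq_trans (f * \sum_(y : Q) \sum_(t < f) EE y t)); last by rewrite leq_mul2l sE orbT.
  rewrite big_distrr /=; apply: leq_sum => y _.
  rewrite big_distrr -big_split /= big_distrr /=; apply: leq_sum => t _.
  exact: hyt.
have h2 : f * #|R| <= f * K.
  rewrite -sL /K big_distrr /=; apply: leq_sum => y _.
  rewrite big_distrr /=; apply: leq_sum => t _.
  case: (posnP #|LL F R y t|) => [->|pos] //=; rewrite muln1; exact: LL_le.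
have K0 : K = 0.
  apply/eqP; rewrite -leqn0; move: h1; rewrite mulnCA -{2}[f * (b * #|R|)]addn0.
  by rewrite leq_add2l.
by move: h2; rewrite K0 muln0 leqn0 muln_eq0 => /orP[] /eqP; lia.
Qed.

Lemma greedy (F : seq G) : uniq F -> 0 < size F -> forall (T : nat) (R : {set Q}), T <= #|R| ->
  exists B, [/\ B \subset R, T <= #|B|, #|B| < T + size F &
     size F * edges_between S pi B (R :\: B) <= size (bpairs F) * #|B|].
Proof.
move=> uF f0 T; elim/ltn_ind: T => T IH R TR.
case: (posnP T) => [T0|Tpos].
  exists finset.set0; rewrite cards0 T0 add0n; split => //; first exact: finset.sub0set.
  have : edges_between S pi finset.set0 (R :\: finset.set0) <= 0 by apply: leq_trans (E_le _ _) _; rewrite cards0.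
  by rewrite leqn0 => /eqP ->; rewrite muln0.
have [B1 [s1 p1 l1 e1]] := extract uF f0 (leq_trans Tpos TR).
case: (leqP T #|B1|) => TB1.
  exists B1; split => //; lia.
have hT : T - #|B1| < T by rewrite ltn_subrL p1 Tpos.
have cR : #|R :\: B1| = #|R| - #|B1| by rewrite cardsD (finset.setIidPr s1).
have TR2 : T - #|B1| <= #|R :\: B1| by rewrite cR; exact: leq_sub2r.
have [B2 [s2 p2 l2 e2]] := IH _ hT (R :\: B1) TR2.
have d12 : [disjoint B1 & B2].
  rewrite disjoint_sym disjoint_subset; apply/fintype.subsetP => x /(fintype.subsetP s2); by rewrite !inE => /andP[].
exists (B1 :|: B2); rewrite (card_disjU d12); split.
- by rewrite finset.subUset s1 (fintype.subset_trans s2 (finset.subsetDl _ _)).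
- lia.
- lia.
- rewrite mulnDr; apply: leq_trans (_ : _ <= size F * (edges_between S pi B1 (R :\: B1) + edges_between S pi B2 ((R :\: B1) :\: B2))) _.
    rewrite leq_mul2l; apply/orP; right; apply: leq_trans (E_U1 _ _ _) _; apply: leq_add.
      by apply: E_mono (fintype.subxx _) _; apply: finset.setDS; exact: finset.subsetUl.
    by rewrite finset.setDDl.
  by rewrite mulnDr leq_add.
Qed.

Local Open Scope ring_scope.
Variable Rl : realType.

Lemma split_real (A : {set Q}) (t : Rl) (F : seq G) : uniq F -> (0 < size F)%N ->
  (size F)%:R <= 3 * t / 16 -> (#|A|)%:R <= t -> 3 / 4 * t < (#|A|)%:R -> 0 <= t ->
  exists B, [/\ B \subset A, (#|B|)%:R <= 3 / 4 * t, (#|A :\: B|)%:R <= 3 / 4 * t &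
     (size F * edges_between S pi B (A :\: B) <= size (bpairs F) * #|B|)%N].
Proof.
move=> uF f0 hf hm1 hm2 t0.
set m := #|A|.
have exP : exists T : nat, ((m - T)%N%:R <= 3 / 4 * t :> Rl) by exists m; rewrite subnn; lra.
case: (ex_minnP exP) => T0 PT0 minT.
have T0m : (T0 <= m)%N by apply: minT; rewrite subnn; lra.
have [B [sB p1 l1 e1]] := greedy uF f0 T0m.
exists B; split => //; last first.
  apply: le_trans PT0; rewrite ler_nat cardsD (finset.setIidPr sB) leq_sub2l //.
have hB : (#|B| <= T0.-1 + size F)%N by move: l1; case: (T0) => [|n] /=; lia.
apply: (@le_trans _ _ ((T0.-1 + size F)%N%:R)); first by rewrite ler_nat.
rewrite natrD.
case: (posnP T0) => [T00|Tpos].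
  by rewrite T00 /= add0r; lra.
have nP : ~~ ((m - T0.-1)%N%:R <= 3 / 4 * t :> Rl).
  apply/negP => h; have := minT _ h; rewrite leqNgt => /negP; apply.
  by rewrite prednK.
move: nP; rewrite -ltNge natrB; last by apply: leq_trans T0m; exact: leq_pred.
lra.
Qed.

Lemma FS_ne (V : Rl) : exists r, [set r : Rl | exists F : seq G,
        [/\ uniq F, F != [::], (size F)%:R <= Num.max V 1
          & r = (cayley_boundary S F)%:R / (size F)%:R]]%classic r.
Proof.
exists ((cayley_boundary S [:: 1%g])%:R / 1%:R), [:: 1%g]; split => //.
by rewrite /= le_max lexx orbT.
Qed.

Lemma FS_lb (V : Rl) : lbound [set r : Rl | exists F : seq G,
        [/\ uniq F, F != [::], (size F)%:R <= Num.max V 1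
          & r = (cayley_boundary S F)%:R / (size F)%:R]]%classic 0.
Proof. by move=> r [F [_ _ _ ->]]; rewrite divr_ge0. Qed.

Lemma phi_ge0 (V : Rl) : 0 <= folner_profile S V.
Proof. by apply: lb_le_inf; [exact: FS_ne | exact: FS_lb]. Qed.

Lemma phi_adh (V eps : Rl) : 0 < eps -> exists F, [/\ uniq F, (0 < size F)%N,
  (size F)%:R <= Num.max V 1 &
  (size (bpairs F))%:R <= (folner_profile S V + eps) * (size F)%:R].
Proof.
move=> e0; have [r [F [uF nF sF ->]] hr] := inf_adherent e0 (conj (@FS_ne V) (ex_intro _ 0 (@FS_lb V))).
exists F; split => //; first by case: F nF {uF sF hr}.
have f0 : (0 : Rl) < (size F)%:R by rewrite ltr0n; case: F nF {uF sF hr}.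
by rewrite -ler_pdivrMr //; apply: ltW.
Qed.

Lemma cut (A : {set Q}) (t eps : Rl) : 0 < eps -> (6 <= #|A|)%N -> (#|A|)%:R <= t ->
  3 / 4 * t < (#|A|)%:R ->
  exists B, [/\ B \subset A, (#|B|)%:R <= 3 / 4 * t, (#|A :\: B|)%:R <= 3 / 4 * t &
    (edges_between S pi B (A :\: B))%:R <=
      (folner_profile S (4^-1 * (3 / 4 * t)) + eps) * (3 / 4 * t)].
Proof.
move=> e0 A6 hA1 hA2.
have t6 : 6 <= t by apply: le_trans hA1; rewrite (ler_nat _ 6).
set V := 4^-1 * (3 / 4 * t).
have V1 : Num.max V 1 = V by apply/max_idPl; rewrite /V; lra.
have [F [uF f0 sF hb]] := phi_adh V e0.
rewrite V1 in sF.
have sF' : (size F)%:R <= 3 * t / 16 by move: sF; rewrite /V; lra.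
have t0 : 0 <= t by lra.
have [B [sB b1 b2 hE]] := split_real uF f0 sF' hA1 hA2 t0.
exists B; split => //.
set f := (size F)%:R : Rl; set E := (edges_between S pi B (A :\: B))%:R : Rl.
set b := (size (bpairs F))%:R : Rl; set c := (#|B|)%:R : Rl.
have hE' : f * E <= b * c by rewrite /f /E /b /c -!natrM ler_nat.
have fpos : 0 < f by rewrite /f ltr0n.
have pe : 0 <= folner_profile S V + eps by rewrite addr_ge0 ?phi_ge0 ?ltW.
have c0 : 0 <= c by rewrite /c ler0n.
have E1 : E <= (folner_profile S V + eps) * c.
  rewrite -(ler_pM2l fpos); apply: le_trans hE' _.
  rewrite mulrA; apply: ler_wpM2r => //; by rewrite mulrC.
apply: le_trans E1 _; exact: ler_wpM2l.
Qed.

Definition tt (n k : nat) : Rl := (3 / 4) ^+ k * n%:R.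
Definition cost (n : nat) (eps : Rl) (k : nat) : Rl :=
  (folner_profile S (4^-1 * (3 / 4) ^+ k.+1 * n%:R) + eps) * ((3 / 4) ^+ k.+1 * n%:R).
Definition goodR (A : {set Q}) (x : Rl) := exists w, good A w /\ w%:R <= x.

Lemma cost_ge0 n eps k : 0 <= eps -> 0 <= cost n eps k.
Proof.
move=> e0; rewrite /cost; apply: mulr_ge0; first by rewrite addr_ge0 ?phi_ge0.
by rewrite mulr_ge0 ?exprn_ge0 ?ler0n //; lra.
Qed.

Lemma sum_cost_ge0 n eps k N : 0 <= eps -> 0 <= \sum_(k <= j < N) cost n eps j.
Proof. by move=> e0; apply: sumr_ge0 => j _; exact: cost_ge0. Qed.

Lemma base_goodR n eps A k N : 0 <= eps -> (#|A| <= 5)%N ->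
  goodR A (6 + \sum_(k <= j < N) cost n eps j).
Proof.
move=> e0 A5; exists 6%N; split; first exact: good_base.
have := sum_cost_ge0 n k N e0; lra.
Qed.

Lemma main_ind n N eps : 0 < eps -> tt n N < 6 ->
  forall m A k, (#|A| <= m)%N -> (k <= N)%N -> #|A|%:R <= tt n k ->
  goodR A (6 + \sum_(k <= j < N) cost n eps j).
Proof.
move=> e0 hN; elim=> [|m IH] A k hAm hkN hAt.
  by apply: base_goodR; [exact: ltW | lia].
case: (leqP #|A| 5) => A5; first by apply: base_goodR => //; exact: ltW.
have A6r : (6 : Rl) <= #|A|%:R by rewrite (ler_nat _ 6).
have kN : (k < N)%N.
  rewrite ltn_neqAle hkN andbT; apply/negP => /eqP ek; move: hAt; rewrite ek => h.
  have := le_lt_trans h hN; lra.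
pose P j := (k < j)%N && (tt n j < #|A|%:R).
have PN : P N by rewrite /P kN /=; lra.
have exP : exists j, P j by exists N.
case: (ex_minnP exP) => j0 /andP[kj0 tj0] minj.
have j0N : (j0 <= N)%N by apply: minj.
set k' := j0.-1.
have ej : j0 = k'.+1 by rewrite /k' prednK //; lia.
have kk' : (k <= k')%N by lia.
have k'N : (k' < N)%N by lia.
have tk' : #|A|%:R <= tt n k'.
  case: (eqVneq k k') => [<- //|nk].
  case: (leP #|A|%:R (tt n k')) => // hlt.
  have : (j0 <= k')%N by apply: minj; rewrite /P hlt andbT; lia.
  lia.
have e34 : 3 / 4 * tt n k' = tt n k'.+1 by rewrite /tt exprS mulrA.
have tlt : 3 / 4 * tt n k' < #|A|%:R by rewrite e34 -ej.
have [B [sB b1 b2 hE]] := cut e0 A5 tk' tlt.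
rewrite e34 in b1 b2.
have hc : (folner_profile S (4^-1 * (3 / 4 * tt n k')) + eps) * (3 / 4 * tt n k')
   = cost n eps k' by rewrite /cost /tt exprS !mulrA.
rewrite hc in hE.
have ltB : (#|B| <= m)%N.
  have : #|B|%:R < #|A|%:R :> Rl by apply: le_lt_trans b1 _; rewrite -ej.
  rewrite ltr_nat; lia.
have ltC : (#|A :\: B| <= m)%N.
  have : #|A :\: B|%:R < #|A|%:R :> Rl by apply: le_lt_trans b2 _; rewrite -ej.
  rewrite ltr_nat; lia.
have k'N' : (k'.+1 <= N)%N by [].
have [wB [gB hB]] := IH B k'.+1 ltB k'N' b1.
have [wC [gC hC]] := IH (A :\: B) k'.+1 ltC k'N' b2.
have dBC : [disjoint B & A :\: B].
  by rewrite disjoint_subset; apply/fintype.subsetP => x xB; rewrite !inE xB.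
have eA : B :|: (A :\: B) = A.
  apply/finset.setP => x; rewrite !inE; case xB: (x \in B) => //=.
  by rewrite (fintype.subsetP sB _ xB).
have gA := good_U dBC gB gC; rewrite eA in gA.
exists (edges_between S pi B (A :\: B) + maxn wB wC)%N; split => //.
have hmax : (maxn wB wC)%:R <= 6 + \sum_(k'.+1 <= j < N) cost n eps j.
  by rewrite /maxn; case: ifP.
have hs : \sum_(k <= j < N) cost n eps j =
   \sum_(k <= j < k') cost n eps j + (cost n eps k' + \sum_(k'.+1 <= j < N) cost n eps j).
  rewrite (@big_cat_nat _ _ _ k') /=; [ | exact: kk' | exact: ltnW].
  congr (_ + _); exact: big_ltn.
have h0 := sum_cost_ge0 n k k' (ltW e0).
rewrite natrD hs; lra.
Qed.

Lemma pow_nat n : (n * 3 ^ n <= 3 * 4 ^ n)%N /\ (3 ^ n <= 4 ^ n)%N.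
Proof.
elim: n => [|n [IH1 IH2]] //; rewrite !expnS; split; last exact: leq_mul.
nia.
Qed.

Lemma pow_bound n : tt n n < 6.
Proof.
have [h1 _] := pow_nat n.
rewrite /tt expr_div_n -!natrX.
have b0 : (0 : Rl) < (4 ^ n)%N%:R by rewrite ltr0n expn_gt0.
have h : ((n * 3 ^ n)%N%:R : Rl) <= (3 * 4 ^ n)%N%:R by rewrite ler_nat.
rewrite !natrM in h.
rewrite mulrAC ltr_pdivrMr //; nra.
Qed.

Lemma sw_le (A : {set Q}) (x : Rl) : goodR A x -> sweepwidth Rl S pi A <= x.
Proof.
move=> [w [[F [hF hw]] wx]]; apply: le_trans wx.
apply: (@le_trans _ _ (sweep_width S pi A F)%:R); last by rewrite ler_nat.
apply: ge_inf; last by exists F.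
by exists 0 => r [F' [_ ->]]; exact: ler0n.
Qed.

Lemma final (A : {set Q}) : ((sweepwidth Rl S pi A)%:E <=
    6%:E + 2%:E * \sum_(1 <= k <oo)
      (folner_profile S (4^-1 * (3 / 4) ^+ k * #|A|%:R) * ((3 / 4) ^+ k * #|A|%:R))%:E)%E.
Proof.
set n := #|A|.
set a := fun k : nat => folner_profile S (4^-1 * (3 / 4) ^+ k * n%:R) * ((3 / 4) ^+ k * n%:R) : Rl.
have a0 : forall k, 0 <= a k.
  by move=> k; rewrite /a mulr_ge0 ?phi_ge0 // mulr_ge0 ?exprn_ge0 ?ler0n //; lra.
have hN := pow_bound n.
set C := (n * n)%N%:R : Rl.
have key : forall eps, 0 < eps -> sweepwidth Rl S pi A <= 6 + \sum_(0 <= j < n) a j.+1 + eps * C.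
  move=> eps e0.
  have h0 : #|A|%:R <= tt n 0 by rewrite /tt expr0 mul1r.
  apply: le_trans (sw_le (main_ind e0 hN (leqnn n) (leq0n n) h0)) _.
  suff hs : \sum_(0 <= j < n) cost n eps j <= \sum_(0 <= j < n) a j.+1 + eps * C by lra.
  have ec : forall j, cost n eps j = a j.+1 + eps * ((3 / 4) ^+ j.+1 * n%:R).
    by move=> j; rewrite /cost /a mulrDl.
  rewrite (eq_bigr _ (fun j _ => ec j)) big_split /= -big_distrr /= lerD2l.
  apply: ler_wpM2l; first exact: ltW.
  apply: (@le_trans _ _ (\sum_(0 <= j < n) n%:R)).
    apply: ler_sum => j _; rewrite -[X in _ <= X]mul1r ler_wpM2r ?ler0n //.
    apply: exprn_ile1; lra.
  by rewrite sumr_const_nat subn0 /C natrM mulr_natl.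
have C0 : 0 <= C by rewrite ler0n.
have key2 : sweepwidth Rl S pi A <= 6 + \sum_(0 <= j < n) a j.+1.
  apply/ler_addgt0Pr => e e0.
  have c1 : 0 < C + 1 by lra.
  have := key (e / (C + 1)) (divr_gt0 e0 c1).
  move=> h; apply: le_trans h _; rewrite lerD2l.
  rewrite mulrAC ler_pdivrMr //; nra.
have S0 : 0 <= \sum_(0 <= j < n) a j.+1 by apply: sumr_ge0 => j _.
have ee : \sum_(0 <= j < n) a j.+1 = \sum_(1 <= j < n.+1) a j by rewrite big_add1.
rewrite ee in key2 S0.
apply: (@le_trans _ _ (6 + 2 * \sum_(1 <= j < n.+1) a j)%:E).
  rewrite lee_fin; apply: le_trans key2 _; lra.
rewrite EFinD EFinM; apply: leeD2l; apply: lee_wpmul2l; first by rewrite lee_fin; lra.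
rewrite -sumEFin.
apply: (@nneseries_lim_ge _ (fun k => (a k)%:E) xpredT 1 n.+1).
by move=> k _ _; rewrite lee_fin.
Qed.
End Main.

Unset Implicit Arguments.
Local Open Scope ring_scope.

Theorem theorem2p6 (R : realType) (G : groupType) (S : seq G)
  (hS_symm : forall s, s \in S -> (s^-1)%g \in S)
  (hS_gen : forall g : G, exists l : seq G,
      all (fun s => s \in S) l /\ g = (\prod_(s <- l) s)%g)
  (H : {pred G}) (hH : group_closed H)
  (Q : finType) (pi : G -> Q)
  (hpi_surj : forall x : Q, exists g, pi g = x)
  (hpi_coset : forall g g' : G, pi g = pi g' <-> (g^-1 * g')%g \in H)
  (A : {set Q}) :
  ((sweepwidth R S pi A)%:E <=
    6%:E + 2%:E * \sum_(1 <= k <oo)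
      (folner_profile S (4^-1 * (3 / 4) ^+ k * #|A|%:R) * ((3 / 4) ^+ k * #|A|%:R))%:E)%E.
Proof. exact: (final S hpi_surj hpi_coset R A). Qed.
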